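(* Let $(X,\mathcal{R})$ be a partially metric association scheme with respect to $R_1$, whose scheme graph $\Gamma$ is connected with valency $k=3$ and $a_1=p^1_{11}=0$. Let $E$ be a minimal scheme idempotent with multiplicity three and let $\theta$ be the corresponding eigenvalue of $\Gamma$ on $E$. Let $u_1,u_2$ be adjacent vertices of $\Gamma$, let $v_1,v_2$ be the other two neighbors of $u_1$, and let $v_3,v_4$ be the other two neighbors of $u_2$. Fix any vertex $x$ and put $\psi_i=\omega_{xu_i}$ ($i=1,2$) and $\phi_i=\omega_{xv_i}$ ($i=1,2,3,4$). Then $$\{\phi_3,\phi_4\}=\left\{\tfrac12\big(\theta\psi_2-\psi_1+(\phi_1-\phi_2)\big),\ \tfrac12\big(\theta\psi_2-\psi_1-(\phi_1-\phi_2)\big)\right\}.$$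
   Context: A (symmetric) association scheme with rank $d+1$ on a finite set $X$ ($|X|=n$) is a partition $\mathcal{R}=\{R_0,\dots,R_d\}$ of $X\times X$ with $R_0$ the diagonal, each $R_i$ symmetric, and numbers $p^h_{ij}$ such that for every $(x,y)\in R_h$ the number of $z$ with $(x,z)\in R_i$, $(z,y)\in R_j$ equals $p^h_{ij}$. The scheme graph of $R_1$ is the graph on $X$ with $x\sim y$ iff $(x,y)\in R_1$, with adjacency matrix $A_1$. The Bose–Mesner algebra has a basis of minimal scheme idempotents $E_0=\frac1nJ,\dots,E_d$; the multiplicity of $E_j$ is its rank, and if $A_1E_j=\theta E_j$ then $\theta$ is the corresponding eigenvalue on $E_j$. The scheme is partially metric with respect to the connected relation $R_1$ if the distance-$2$ relation of its scheme graph is a relation of the scheme. The cosine for $E$ of a pair $(x,y)$ is $\omega_{xy}=E_{xy}/E_{xx}$ (this depends only on the relation containing $(x,y)$). *)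

(* Defs.v *)
From HB Require Import structures.
From mathcomp Require Import all_boot all_order all_algebra all_field.
Set Implicit Arguments. Unset Strict Implicit. Unset Printing Implicit Defensive.
Import Order.TTheory GRing.Theory Num.Theory.
Local Open Scope ring_scope.

(* A (symmetric) association scheme of rank d+1 on the vertex set X = 'I_n
   is encoded by its "class" function c : X -> X -> 'I_(d.+1):
   (x,y) \in R_i  <->  c x y = i.  The relation R_1 is  inord 1. *)

Definition R1 {d : nat} : 'I_d.+1 := inord 1.

Definition is_assoc_scheme (n d : nat) (c : 'I_n -> 'I_n -> 'I_d.+1)
  (p : 'I_d.+1 -> 'I_d.+1 -> 'I_d.+1 -> nat) : Prop :=
  [/\ (forall x y, (c x y == ord0) = (x == y)),
      (forall x y, c x y = c y x),
      (forall i, exists x y, c x y = i)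
    & (forall i j x y,
         #|[set z | (c x z == i) && (c z y == j)]| = p (c x y) i j) ].

Definition adj (n d : nat) (c : 'I_n -> 'I_n -> 'I_d.+1) : rel 'I_n :=
  fun x y => c x y == R1.

Definition graph_connected (n d : nat) (c : 'I_n -> 'I_n -> 'I_d.+1) : Prop :=
  forall x y, connect (adj c) x y.

Definition dist2 (n d : nat) (c : 'I_n -> 'I_n -> 'I_d.+1) (x y : 'I_n) : bool :=
  [&& x != y, ~~ adj c x y & [exists z, adj c x z && adj c z y]].

Definition partially_metric (n d : nat) (c : 'I_n -> 'I_n -> 'I_d.+1) : Prop :=
  exists j : 'I_d.+1, forall x y, dist2 c x y = (c x y == j).

Definition rel_mx (n d : nat) (c : 'I_n -> 'I_n -> 'I_d.+1) (i : 'I_d.+1)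
  : 'M[algC]_n := \matrix_(x, y) ((c x y == i)%:R).

Definition in_bose_mesner (n d : nat) (c : 'I_n -> 'I_n -> 'I_d.+1)
  (E : 'M[algC]_n) : Prop :=
  exists a : 'I_d.+1 -> algC, E = \sum_(i < d.+1) a i *: rel_mx c i.

Definition minimal_idempotent (n d : nat) (c : 'I_n -> 'I_n -> 'I_d.+1)
  (E : 'M[algC]_n) : Prop :=
  [/\ in_bose_mesner c E, E *m E = E, E != 0
    & forall F, in_bose_mesner c F -> F *m F = F -> F *m E = F ->
        F = 0 \/ F = E ].

Definition cosine (n : nat) (E : 'M[algC]_n) (x y : 'I_n) : algC :=
  E x y / E x x.

(* Main.v *)
Require Import Defs.
From HB Require Import structures.
From mathcomp Require Import all_boot all_order all_algebra all_field.
From mathcomp Require Import ring.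
Import Order.TTheory GRing.Theory Num.Theory.
Local Open Scope ring_scope.



Lemma bm_entry (n d : nat) (c : 'I_n -> 'I_n -> 'I_d.+1) (E : 'M[algC]_n) :
  in_bose_mesner c E -> exists al : 'I_d.+1 -> algC, forall a b, E a b = al (c a b).
Proof.
case=> al ->; exists al => a b; rewrite summxE (bigD1 (c a b)) //= big1.
  by rewrite !mxE eqxx mulr1 addr0.
by move=> i /negbTE hi; rewrite !mxE eq_sym hi mulr0.
Qed.

Lemma sum_delta (n : nat) (p : 'I_n) (F : 'I_n -> algC) :
  \sum_a (a == p)%:R * F a = F p.
Proof.
rewrite (bigD1 p) //= eqxx mul1r big1 ?addr0 // => a /negbTE ->; by rewrite mul0r.
Qed.

Lemma tri_free (n d : nat) (c : 'I_n -> 'I_n -> 'I_d.+1)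
  (p : 'I_d.+1 -> 'I_d.+1 -> 'I_d.+1 -> nat)
  (hsch : is_assoc_scheme c p) (ha1 : p R1 R1 R1 = 0%N) a b z :
  c a b = R1 -> c b z = R1 -> c a z = R1 -> False.
Proof.
case: hsch => _ _ _ h4 hab hbz haz.
have := h4 R1 R1 a z; rewrite haz ha1 => /eqP; rewrite cards_eq0 => /eqP H.
have : b \in [set w | (c a w == R1) && (c w z == R1)] by rewrite inE hab hbz !eqxx.
by rewrite H inE.
Qed.

Lemma dist2_rel (n d : nat) (c : 'I_n -> 'I_n -> 'I_d.+1)
  (p : 'I_d.+1 -> 'I_d.+1 -> 'I_d.+1 -> nat)
  (hsch : is_assoc_scheme c p) (ha1 : p R1 R1 R1 = 0%N) (j : 'I_d.+1)
  (hj : forall x y, dist2 c x y = (c x y == j)) a b z :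
  c a b = R1 -> c b z = R1 -> a != z -> c a z = j.
Proof.
move=> hab hbz haz; apply/eqP; rewrite -hj /dist2 haz /=.
apply/andP; split.
  apply/negP => /eqP H; exact: (@tri_free _ _ _ _ hsch ha1 _ _ _ hab hbz H).
by apply/existsP; exists b; rewrite /adj hab hbz !eqxx.
Qed.



Lemma alg (a0 a1 N q p1 p2 c0 c1 c2 c3 : algC) : a0^+2 - a1^+2 != 0 ->
 c0*a0 + c1*a1 + c3* p1 = 0 -> c0*a1 + c1*a0 + c3* p2 = 0 -> c2*N + c3*q = 0 ->
 c0* p1 + c1* p2 + c2*q + c3*a0 = 0 ->
 ~~ [&& c0 == 0, c1 == 0, c2 == 0 & c3 == 0] ->
 (a0^+2 - a1^+2) * q^+2 = N * ((a0^+2 - a1^+2)*a0 - (a0* p1^+2 - 2*a1* p1* p2 + a0* p2^+2)).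
Proof.
move=> hD r0 r1 r2 r3 hnz.
have [h3|h3] := eqVneq c3 0.
  have hc0 : c0 = 0.
    have : c0 * (a0^+2 - a1^+2) = 0.
      have -> : c0 * (a0^+2 - a1^+2) = a0 * (c0*a0 + c1*a1 + c3* p1) - a1 * (c0*a1 + c1*a0 + c3* p2) - c3 * (a0* p1 - a1* p2) by ring.
      by rewrite r0 r1 h3; ring.
    by move/eqP; rewrite mulf_eq0 (negbTE hD) orbF => /eqP.
  have hc1 : c1 = 0.
    have : c1 * (a0^+2 - a1^+2) = 0.
      have -> : c1 * (a0^+2 - a1^+2) = a0 * (c0*a1 + c1*a0 + c3* p2) - a1 * (c0*a0 + c1*a1 + c3* p1) - c3 * (a0* p2 - a1* p1) by ring.
      by rewrite r0 r1 h3; ring.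
    by move/eqP; rewrite mulf_eq0 (negbTE hD) orbF => /eqP.
  have hc2 : c2 != 0 by move: hnz; rewrite hc0 hc1 h3 !eqxx andbT.
  have hN : N = 0.
    by move: r2; rewrite h3 mul0r addr0 => /eqP; rewrite mulf_eq0 (negbTE hc2) => /eqP.
  have hq : q = 0.
    by move: r3; rewrite h3 hc0 hc1 !mul0r !add0r addr0 => /eqP; rewrite mulf_eq0 (negbTE hc2) => /eqP.
  by rewrite hN hq; ring.
have : (N * ((a0^+2 - a1^+2)*a0 - (a0* p1^+2 - 2*a1* p1* p2 + a0* p2^+2)) - (a0^+2 - a1^+2) * q^+2) * c3 = 0.
  have -> : (N * ((a0^+2 - a1^+2)*a0 - (a0* p1^+2 - 2*a1* p1* p2 + a0* p2^+2)) - (a0^+2 - a1^+2) * q^+2) * c3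
    = N * ((a0^+2 - a1^+2) * (c0* p1 + c1* p2 + c2*q + c3*a0) - p1 * (a0 * (c0*a0 + c1*a1 + c3* p1) - a1 * (c0*a1 + c1*a0 + c3* p2))
           - p2 * (a0 * (c0*a1 + c1*a0 + c3* p2) - a1 * (c0*a0 + c1*a1 + c3* p1))) - (a0^+2 - a1^+2) * q * (c2*N + c3*q) by ring.
  by rewrite r0 r1 r2 r3; ring.
move/eqP; rewrite mulf_eq0 (negbTE h3) orbF => /eqP h.
by apply/eqP; rewrite eq_sym -subr_eq0 h.
Qed.



Lemma gram_entry (n : nat) (E : 'M[algC]_n) (P : 'I_4 -> 'I_n) (k : 'I_4 -> algC) (w : 'I_n) i j :
  let S := \matrix_(a, i) ((a == P i)%:R - k i * (a == w)%:R) in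
  (S^T *m E *m S) i j = (E (P i) (P j) - k j * E (P i) w) - k i * (E w (P j) - k j * E w w).
Proof.
move=> S.
have hd : forall i (F : 'I_n -> algC), \sum_a S a i * F a = F (P i) - k i * F w.
  move=> i0 F; rewrite /S; under eq_bigr do rewrite mxE mulrBl.
  rewrite sumrB sum_delta; congr (_ - _).
  under eq_bigr do rewrite -mulrA; by rewrite -mulr_sumr sum_delta.
rewrite mxE.
have h1 : forall b, (S^T *m E) i b = E (P i) b - k i * E w b.
  move=> b; rewrite mxE; under eq_bigr do rewrite mxE. by rewrite hd.
under eq_bigr => b _ do rewrite h1 mulrC.
rewrite (hd j (fun b => E (P i) b - k i * E w b)) /=; ring.
Qed.

Lemma gram (n : nat) (E : 'M[algC]_n) (hrk : (\rank E <= 3)%N) (t1 t2 v v' x : 'I_n) (a0 a1 aj : algC)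
 (hsym : forall a b, E a b = E b a)
 (h11 : E t1 t1 = a0) (h22 : E t2 t2 = a0) (hvv : E v v = a0) (hv'v' : E v' v' = a0) (hxx : E x x = a0)
 (h12 : E t1 t2 = a1) (h1v : E t1 v = a1) (h1v' : E t1 v' = a1)
 (h2v : E t2 v = aj) (h2v' : E t2 v' = aj) (hvv' : E v v' = aj)
 (hD : a0^+2 - a1^+2 != 0) :
 (a0^+2 - a1^+2) * (E x v - E x v')^+2 = (2*a0 - 2*aj) * ((a0^+2 - a1^+2)*a0 - (a0 * (E x t1)^+2 - 2*a1*(E x t1)*(E x t2) + a0*(E x t2)^+2)).
Proof.
pose P (i : 'I_4) := nth x [:: t1; t2; v] i.
pose k (i : 'I_4) : algC := ((i : nat) == 2%N)%:R.
pose S := \matrix_(a, i) ((a == P i)%:R - k i * (a == v')%:R).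
pose G := S^T *m E *m S.
have hGe : forall i j, G i j = (E (P i) (P j) - k j * E (P i) v') - k i * (E v' (P j) - k j * E v' v').
  move=> i j; exact: gram_entry.
have hG : (\rank G <= 3)%N := leq_trans (mxrankM_maxl _ _) (leq_trans (mxrankM_maxr _ _) hrk).
have hK : kermx G != 0.
  by rewrite -mxrank_eq0 mxrank_ker subn_eq0 -ltnNge ltnS.
have [i0 hi0] : exists i, row i (kermx G) != 0.
  apply/existsP; apply: contraR hK => /existsPn H; apply/eqP/row_matrixP => i.
  by rewrite row0; move/negPn: (H i) => /eqP.
set cv := row i0 (kermx G) in hi0.
have hc : cv *m G = 0 by apply/sub_kermxP; exact: row_sub.
have eq j : \sum_i cv 0 i * G i j = 0.
  by move/matrixP: hc => /(_ 0 j); rewrite !mxE.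
have e0 := eq ord0. have e1 := eq (lift ord0 ord0).
have e2 := eq (lift ord0 (lift ord0 ord0)). have e3 := eq (lift ord0 (lift ord0 (lift ord0 ord0))).
rewrite !big_ord_recl !big_ord0 !hGe /P /k /= in e0 e1 e2 e3.
rewrite [E t2 t1]hsym [E v t1]hsym [E v' t1]hsym [E v t2]hsym [E v' t2]hsym [E v' v]hsym
  [E t1 x]hsym [E t2 x]hsym [E v x]hsym [E v' x]hsym in e0 e1 e2 e3.
rewrite h11 h22 hvv hv'v' hxx h12 h1v h1v' h2v h2v' hvv' in e0 e1 e2 e3.
set c0 := cv 0 ord0 in e0 e1 e2 e3 hi0.
set c1 := cv 0 (lift ord0 ord0) in e0 e1 e2 e3 hi0.
set c2 := cv 0 (lift ord0 (lift ord0 ord0)) in e0 e1 e2 e3 hi0.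
set c3 := cv 0 (lift ord0 (lift ord0 (lift ord0 ord0))) in e0 e1 e2 e3 hi0.
apply: (@alg a0 a1 (2*a0 - 2*aj) (E x v - E x v') (E x t1) (E x t2) c0 c1 c2 c3 hD).
- by apply: etrans e0; ring.
- by apply: etrans e1; ring.
- by apply: etrans e2; ring.
- by apply: etrans e3; ring.
apply: contra hi0 => /and4P [/eqP z0 /eqP z1 /eqP z2 /eqP z3].
apply/eqP/rowP => i; rewrite [RHS]mxE.
case: i => [[|[|[|[|i]]]] hi] //.
- by rewrite -z0 /c0; congr (cv 0 _); apply: val_inj.
- by rewrite -z1 /c1; congr (cv 0 _); apply: val_inj.
- by rewrite -z2 /c2; congr (cv 0 _); apply: val_inj.
- by rewrite -z3 /c3; congr (cv 0 _); apply: val_inj.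
Qed.



Lemma energy (n : nat) (r : rel 'I_n) (rsym : forall x y, r x y = r y x)
  (hk : forall x, \sum_y (r x y)%:R = 3 :> algC) (f : 'I_n -> algC) (e th : algC)
  (he : e^+2 = 1) (hec : e^* = e) (hth : th = 3 * e)
  (hf : forall x, \sum_y (r x y)%:R * f y = th * f x) :
  forall x y, r x y -> f x = e * f y.
Proof.
pose A x y : algC := (r x y)%:R.
pose S := \sum_x f x * (f x)^*.
have hthc : th^* = th by rewrite hth rmorphM /= hec conjC_nat.
have t1 : \sum_x \sum_y A x y * (f x * (f x)^*) = 3 * S.
  rewrite /S mulr_sumr; apply: eq_bigr => x _; by rewrite -mulr_suml hk.
have t2 : \sum_x \sum_y A x y * (f x * (f y)^*) = th * S.
  rewrite /S mulr_sumr; apply: eq_bigr => x _.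
  have -> : \sum_y A x y * (f x * (f y)^*) = f x * (\sum_y A x y * f y)^*.
    rewrite rmorph_sum /= mulr_sumr; apply: eq_bigr => y _.
    by rewrite rmorphM /= /A conjC_nat; ring.
  by rewrite hf rmorphM /= hthc; ring.
have t3 : \sum_x \sum_y A x y * (f y * (f x)^*) = th * S.
  rewrite /S mulr_sumr; apply: eq_bigr => x _.
  have -> : \sum_y A x y * (f y * (f x)^*) = (f x)^* * (\sum_y A x y * f y).
    rewrite mulr_sumr; apply: eq_bigr => y _; ring.
  by rewrite hf; ring.
have t4 : \sum_x \sum_y A x y * (f y * (f y)^*) = 3 * S.
  rewrite exchange_big /S mulr_sumr; apply: eq_bigr => y _.
  rewrite -mulr_suml; congr (_ * _); rewrite -(hk y); apply: eq_bigr => x _.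
  by rewrite /A rsym.
have hsum : forall x y, A x y * ((f x - e * f y) * (f x - e * f y)^*) =
   A x y * (f x * (f x)^*) - e * (A x y * (f x * (f y)^*)) - e * (A x y * (f y * (f x)^*))
   + e^+2 * (A x y * (f y * (f y)^*)).
  by move=> x y; rewrite rmorphB rmorphM /= hec; ring.
have hT : \sum_x \sum_y A x y * ((f x - e * f y) * (f x - e * f y)^*) = 0.
  under eq_bigr => x _ do under eq_bigr => y _ do rewrite hsum.
  under eq_bigr => x _ do rewrite big_split /= sumrB sumrB -!mulr_sumr.
  rewrite big_split /= sumrB sumrB -!mulr_sumr t1 t2 t3 t4 hth.
  have -> : 3 * S - e * (3 * e * S) - e * (3 * e * S) + e ^+ 2 * (3 * S) = 3 * S * (1 - e^+2) by ring.
  by rewrite he subrr mulr0.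
have hge : forall x y, 0 <= A x y * ((f x - e * f y) * (f x - e * f y)^*).
  by move=> x y; rewrite mulr_ge0 ?ler0n ?mul_conjC_ge0.
move=> x y rxy.
have hx : \sum_y A x y * ((f x - e * f y) * (f x - e * f y)^*) = 0.
  by apply: (psumr_eq0P _ hT) => // i _; apply: sumr_ge0 => j _; exact: hge.
have := (psumr_eq0P (fun j _ => hge x j) hx).
move=> /(_ y isT).
rewrite /A rxy mul1r => /eqP; rewrite mul_conjC_eq0 subr_eq0 => /eqP //.
Qed.



Lemma sum_adj (n d : nat) (c : 'I_n -> 'I_n -> 'I_d.+1) x (F : 'I_n -> algC) :
  \sum_y (c x y == R1)%:R * F y = \sum_(y in [set y | adj c x y]) F y.
Proof.
rewrite [RHS]big_mkcond; apply: eq_bigr => y _; rewrite inE /adj.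
by case: (c x y == R1); rewrite ?mul1r ?mul0r.
Qed.

Lemma degen (n d : nat) (c : 'I_n -> 'I_n -> 'I_d.+1) (csym : forall x y, c x y = c y x)
 (hconn : graph_connected c)
 (hk : forall x, #|[set y | adj c x y]| = 3%N) (E : 'M[algC]_n) (al : 'I_d.+1 -> algC)
 (hE : forall a b, E a b = al (c a b))
 (hc0 : forall x, c x x = ord0) (hrk : \rank E = 3%N) (th : algC) (hth : rel_mx c R1 *m E = th *: E) (u : 'I_n)
 (h0 : al ord0 != 0) : al ord0 ^+2 - al R1 ^+2 != 0.
Proof.
apply/negP => /eqP hD.
have [e [he hec hal]] : exists e, [/\ e^+2 = 1, e^* = e & al R1 = e * al ord0].
  have : (al ord0 - al R1) * (al ord0 + al R1) = 0 by apply: etrans hD; ring.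
  move/eqP; rewrite mulf_eq0 => /orP [|] /eqP h.
    exists 1; split; [by rewrite expr1n | by rewrite rmorph1 |].
    by apply/eqP; rewrite mul1r eq_sym -subr_eq0 h.
  exists (-1); split; [by rewrite sqrrN expr1n | by rewrite rmorphN1 |].
  by apply/eqP; rewrite mulN1r -subr_eq0 opprK addrC h.
have hk' : forall x, \sum_y ((c x y == R1))%:R = 3 :> algC.
  move=> x; have := @sum_adj _ _ c x (fun _ => 1); rewrite sumr_const hk => h.
  have <- : \sum_y (c x y == R1)%:R * (1:algC) = \sum_y ((c x y == R1))%:R.
    by apply: eq_bigr => y _; rewrite mulr1.
  by rewrite h.
have hf : forall x j, \sum_y (c x y == R1)%:R * E y j = th * E x j.
  move=> x j; move/matrixP: hth => /(_ x j); rewrite !mxE => <-.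
  by apply: eq_bigr => y _; rewrite mxE.
have hthe : th = 3 * e.
  have := hf u u; rewrite sum_adj.
  have -> : \sum_(y in [set y | adj c u y]) E y u = \sum_(y in [set y | adj c u y]) al R1.
    by apply: eq_bigr => y; rewrite inE /adj => /eqP h; rewrite hE csym h.
  rewrite sumr_const hk hE hc0 hal => h.
  apply: (mulIf h0); rewrite -h -mulr_natl; ring.
have hen : forall j x y, adj c x y -> E x j = e * E y j.
  move=> j; apply: (@energy n (fun x y => c x y == R1) _ hk' (fun y => E y j) e th he hec hthe).
    by move=> x y; rewrite csym.
  by move=> x; rewrite hf.
have step : forall p y, path (adj c) y p -> (exists l, forall j, E y j = l * E u j) ->
    exists l, forall j, E (last y p) j = l * E u j.
  elim=> [|z p IH] y //= /andP [hyz hp] [l hl]; apply: IH hp _.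
  exists (e * l) => j; have hzy : adj c z y by rewrite /adj csym.
  by rewrite (hen j z y hzy) hl mulrA.
have hrow : forall y, exists l, forall j, E y j = l * E u j.
  move=> y; have /connectP [p hp ->] := hconn u y; apply: step hp _.
  by exists 1 => j; rewrite mul1r.
have hsub : (E <= row u E)%MS.
  apply/row_subP => y; apply/sub_rVP; have [l hl] := hrow y; exists l.
  by apply/rowP => j; rewrite !mxE hl.
have := mxrankS hsub; rewrite hrk => h.
by have := leq_trans h (rank_leq_row _).
Qed.



Lemma fin_alg (X1 X2 Y1 Y2 X3 X4 th r : algC) : X1 + X3 + X4 = th * X2 ->
  (X3 - X4 = Y1 - Y2 \/ X3 - X4 = -(Y1 - Y2)) ->
 (X3 * r = (th * (X2 * r) - X1 * r + (Y1 * r - Y2 * r)) / 2 /\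
  X4 * r = (th * (X2 * r) - X1 * r - (Y1 * r - Y2 * r)) / 2) \/
 (X3 * r = (th * (X2 * r) - X1 * r - (Y1 * r - Y2 * r)) / 2 /\
  X4 * r = (th * (X2 * r) - X1 * r + (Y1 * r - Y2 * r)) / 2).
Proof.
move=> hs hd.
have h4 : X4 = th * X2 - X1 - X3 by rewrite -hs; ring.
have two : (2 : algC) != 0 by rewrite pnatr_eq0.
rewrite h4 in hd.
have h3 : X3 = ((X3 - (th * X2 - X1 - X3)) + (th * X2 - X1)) / 2 by field.
case: hd => hd; rewrite hd in h3; rewrite h4 h3; [left|right]; split; field => //.
Qed.



Theorem lemma4p1 (n d : nat) (c : 'I_n -> 'I_n -> 'I_d.+1)
  (p : 'I_d.+1 -> 'I_d.+1 -> 'I_d.+1 -> nat)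
  (hd : (0 < d)%N)
  (hsch : is_assoc_scheme c p)
  (hpm : partially_metric c)
  (hconn : graph_connected c)
  (hk : forall x : 'I_n, #|[set y | adj c x y]| = 3%N)
  (ha1 : p R1 R1 R1 = 0%N)
  (E : 'M[algC]_n) (hE : minimal_idempotent c E) (hrk : \rank E = 3%N)
  (theta : algC) (htheta : rel_mx c R1 *m E = theta *: E)
  (u1 u2 v1 v2 v3 v4 x : 'I_n)
  (hu : adj c u1 u2)
  (hv1 : adj c u1 v1) (hv2 : adj c u1 v2) (hv12 : v1 != v2)
  (hv1u : v1 != u2) (hv2u : v2 != u2)
  (hv3 : adj c u2 v3) (hv4 : adj c u2 v4) (hv34 : v3 != v4)
  (hv3u : v3 != u1) (hv4u : v4 != u1) :
  let psi1 := cosine E x u1 in let psi2 := cosine E x u2 in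
  let phi1 := cosine E x v1 in let phi2 := cosine E x v2 in
  let phi3 := cosine E x v3 in let phi4 := cosine E x v4 in
  let a := (theta * psi2 - psi1 + (phi1 - phi2)) / 2 in
  let b := (theta * psi2 - psi1 - (phi1 - phi2)) / 2 in
  (phi3 = a /\ phi4 = b) \/ (phi3 = b /\ phi4 = a).
Proof.
move=> psi1 psi2 phi1 phi2 phi3 phi4 a b.
rewrite /a /b /phi1 /phi2 /phi3 /phi4 /psi1 /psi2 /cosine.
have hsch' := hsch.
case: hsch' => h0d csym _ _.
have hc0 : forall y, c y y = ord0 by move=> y; apply/eqP; rewrite h0d.
case: hE => hbm _ _ _.
have [al hEal] := @bm_entry n d c E hbm.
have [j hj] := hpm.
have hEsym : forall a b, E a b = E b a by move=> a0 b0; rewrite !hEal csym.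
have hxx : E x x = al ord0 by rewrite hEal hc0.
have [h0|h0] := eqVneq (al ord0) 0.
  rewrite hxx h0 invr0 !mulr0; left; split; ring.
have hD := @degen n d c csym hconn hk E al hEal hc0 hrk theta htheta u1 h0.
have cu12 : c u1 u2 = R1 by apply/eqP.
have cu21 : c u2 u1 = R1 by rewrite csym.
have cu1v1 : c u1 v1 = R1 by apply/eqP.
have cu1v2 : c u1 v2 = R1 by apply/eqP.
have cu2v3 : c u2 v3 = R1 by apply/eqP.
have cu2v4 : c u2 v4 = R1 by apply/eqP.
have d2 := @dist2_rel _ _ c p hsch ha1 j hj.
have g1 := @gram n E (eq_leq hrk) u1 u2 v1 v2 x (al ord0) (al R1) (al j) hEsym
  ltac:(by rewrite hEal hc0) ltac:(by rewrite hEal hc0) ltac:(by rewrite hEal hc0)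
  ltac:(by rewrite hEal hc0) hxx
  ltac:(by rewrite hEal cu12) ltac:(by rewrite hEal cu1v1) ltac:(by rewrite hEal cu1v2)
  ltac:(by rewrite hEal (d2 u2 u1 v1 cu21 cu1v1 ltac:(by rewrite eq_sym)))
  ltac:(by rewrite hEal (d2 u2 u1 v2 cu21 cu1v2 ltac:(by rewrite eq_sym)))
  ltac:(by rewrite hEal (d2 v1 u1 v2 ltac:(by rewrite csym) cu1v2 hv12)) hD.
have g2 := @gram n E (eq_leq hrk) u2 u1 v3 v4 x (al ord0) (al R1) (al j) hEsym
  ltac:(by rewrite hEal hc0) ltac:(by rewrite hEal hc0) ltac:(by rewrite hEal hc0)
  ltac:(by rewrite hEal hc0) hxx
  ltac:(by rewrite hEal cu21) ltac:(by rewrite hEal cu2v3) ltac:(by rewrite hEal cu2v4)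
  ltac:(by rewrite hEal (d2 u1 u2 v3 cu12 cu2v3 ltac:(by rewrite eq_sym)))
  ltac:(by rewrite hEal (d2 u1 u2 v4 cu12 cu2v4 ltac:(by rewrite eq_sym)))
  ltac:(by rewrite hEal (d2 v3 u2 v4 ltac:(by rewrite csym) cu2v4 hv34)) hD.
have hq : (E x v3 - E x v4)^+2 = (E x v1 - E x v2)^+2.
  apply: (mulfI hD); rewrite g1 g2; ring.
have hdiff : E x v3 - E x v4 = E x v1 - E x v2 \/ E x v3 - E x v4 = - (E x v1 - E x v2).
  have : (E x v3 - E x v4 - (E x v1 - E x v2)) * (E x v3 - E x v4 + (E x v1 - E x v2)) = 0.
    by apply: etrans (_ : (E x v3 - E x v4)^+2 - (E x v1 - E x v2)^+2 = 0); [ring | rewrite hq subrr].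
  move/eqP; rewrite mulf_eq0 => /orP [] /eqP h; [left | right].
    by apply/eqP; rewrite -subr_eq0 h.
  by apply/eqP; rewrite -subr_eq0 opprK h.
have hN : [set y | adj c u2 y] = u1 |: (v3 |: [set v4]).
  apply/eqP; rewrite eq_sym eqEcard; apply/andP; split.
    apply/subsetP => y; rewrite !inE => /orP [/eqP -> | /orP [] /eqP ->] //.
    by rewrite /adj cu21.
  rewrite hk !cardsU1 cards1 !inE (eq_sym u1 v3) (eq_sym u1 v4).
  by rewrite (negbTE hv3u) (negbTE hv4u) (negbTE hv34).
have hs : E x u1 + E x v3 + E x v4 = theta * E x u2.
  move/matrixP: htheta => /(_ u2 x); rewrite !mxE.
  under eq_bigr do rewrite mxE.
  rewrite sum_adj hN big_setU1 /=; last by rewrite !inE negb_or (eq_sym u1 v3) (eq_sym u1 v4) hv3u hv4u.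
  rewrite big_setU1 /=; last by rewrite !inE hv34.
  rewrite big_set1 [E u1 x]hEsym [E v3 x]hEsym [E v4 x]hEsym [E u2 x]hEsym => <-.
  by rewrite addrA.
exact: fin_alg.
Qed.
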